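(* Let $k\ge 1$, and let $E_k$, $\oplus$, $\mathcal A_k$ be as in the context. Then: (i) $(E_k,\oplus,\emptyset,\Gamma^k)$ is an effect algebra, and every element of $\mathcal A_k$ belongs to $E_k$. (ii) For every state $\rho$ on $E_k$, the function $P_\rho(\alpha_1\dots\alpha_k\mid a_1\dots a_k)=\rho\big([a_1\alpha_1]\times\cdots\times[a_k\alpha_k]\big)$ is a PR-state (in particular it satisfies the no-signaling condition). Conversely, for every PR-state $P$ there is a unique state $\rho_P$ on $E_k$ with $\rho_P\big([a_1\alpha_1]\times\cdots\times[a_k\alpha_k]\big)=P(\alpha_1\dots\alpha_k\mid a_1\dots a_k)$ for all inputs and outputs; it is given by $\rho_P(q_1\cup\dots\cup q_n)=\sum_{i=1}^n\rho_P(q_i)$ for any decomposition of an element of $E_k$ into pairwise disjoint $q_i\in\mathcal A_k$, and this value does not depend on the chosen decomposition. Hence $\rho\mapsto P_\rho$ is a bijection between the set of states on $E_k$ and the set of PR-states of the $k$-box model.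
   Context: Fix an integer $N\ge1$ (number of inputs) and nonempty finite sets $\mathcal U_1,\dots,\mathcal U_N$ ($\mathcal U_a$ is the set of outputs for input $a$). Put $\Gamma=\mathcal U_1\times\cdots\times\mathcal U_N$. For $a\in\{1,\dots,N\}$ and $\mathcal A\subseteq\mathcal U_a$ let $[a\in\mathcal A]=\{\gamma\in\Gamma:\gamma_a\in\mathcal A\}$ and $[a\alpha]=[a\in\{\alpha\}]$. For $k\ge1$ let $\mathcal A_k=\{[a_1\alpha_1]\times\cdots\times[a_k\alpha_k]\subseteq\Gamma^k : a_i\in\{1,\dots,N\},\ \alpha_i\in\mathcal U_{a_i}\}$. Call a subset of $\Gamma^k$ decomposable if it is a union of pairwise disjoint members of $\mathcal A_k$ (the empty union, giving $\emptyset$, is allowed). Let $E_k$ be the family of all $p\subseteq\Gamma^k$ such that both $p$ and $\Gamma^k\setminus p$ are decomposable. For $p,q\in E_k$, $p\oplus q$ is defined iff $p\cap q=\emptyset$ and $\Gamma^k\setminus(p\cup q)$ is decomposable, and then $p\oplus q=p\cup q$. An effect algebra is a set $E$ with a partial binary operation $\oplus$ and elements $0,1$ such that: (E1) if $p\oplus q$ is defined then $q\oplus p$ is defined and equal; (E2) if $q\oplus r$ and $p\oplus(q\oplus r)$ are defined then $p\oplus q$ and $(p\oplus q)\oplus r$ are defined and $p\oplus(q\oplus r)=(p\oplus q)\oplus r$; (E3) for each $p$ there is a unique $q$ with $p\oplus q=1$; (E4) if $p\oplus1$ is defined then $p=0$. A state on an effect algebra is a map $\rho:E\to[0,1]$ with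 $\rho(1)=1$ and $\rho(p_1\oplus\dots\oplus p_n)=\sum_i\rho(p_i)$ whenever the left side is defined. A PR-state of the $k$-box model is a function $P(\alpha_1\dots\alpha_k\mid a_1\dots a_k)\ge0$, defined for $a_i\in\{1,\dots,N\}$, $\alpha_i\in\mathcal U_{a_i}$, such that for each input tuple $\sum_{\alpha_1,\dots,\alpha_k}P(\alpha_1\dots\alpha_k\mid a_1\dots a_k)=1$, and satisfying no-signaling: for every $i$, every $a_1,\dots,a_k$, every $b_i$ and every fixed $\alpha_j$ ($j\ne i$), $\sum_{\alpha_i\in\mathcal U_{a_i}}P(\alpha_1\dots\alpha_i\dots\alpha_k\mid a_1\dots a_i\dots a_k)=\sum_{\beta_i\in\mathcal U_{b_i}}P(\alpha_1\dots\beta_i\dots\alpha_k\mid a_1\dots b_i\dots a_k)$. *)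

(* Defs.v *)
From HB Require Import structures.
From mathcomp Require Import all_boot all_order all_algebra.
Set Implicit Arguments. Unset Strict Implicit. Unset Printing Implicit Defensive.
Import Order.TTheory GRing.Theory Num.Theory.

(* An effect algebra carried by the subset [E] of a type [T]; [D p q] says
   that [p (+) q] is defined, in which case its value is [op p q]. *)
Definition is_effect_algebra (T : Type) (E : T -> Prop) (D : T -> T -> Prop)
  (op : T -> T -> T) (zero one : T) : Prop :=
  E zero /\ E one /\
      (forall p q, E p -> E q -> D p q -> E (op p q)) /\
      (forall p q, E p -> E q -> D p q -> D q p /\ op p q = op q p) /\
      (forall p q r, E p -> E q -> E r -> D q r -> D p (op q r) ->
         [/\ D p q, D (op p q) r & op p (op q r) = op (op p q) r]) /\
      (forall p, E p -> exists q, [/\ E q, D p q, op p q = one &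
         forall q', E q' -> D p q' -> op p q' = one -> q' = q]) /\
      (forall p, E p -> D p one -> p = zero).

(* [osum E D op s r] : the sum p_1 (+) ... (+) p_n of the nonempty list
   s = [p_1;...;p_n] is defined (bracketed from the left) and equals r. *)
Inductive osum (T : Type) (E : T -> Prop) (D : T -> T -> Prop)
    (op : T -> T -> T) : seq T -> T -> Prop :=
| osum1 p : E p -> osum E D op [:: p] p
| osumS s r q : osum E D op s r -> E q -> D r q ->
    osum E D op (rcons s q) (op r q).

Local Open Scope ring_scope.

Definition is_state (R : realFieldType) (T : Type) (E : T -> Prop)
  (D : T -> T -> Prop) (op : T -> T -> T) (one : T) (rho : T -> R) : Prop :=
  [/\ (forall p, E p -> 0 <= rho p <= 1), rho one = 1 &
      (forall s r, osum E D op s r -> rho r = \sum_(p <- s) rho p)].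

(* N inputs; U a = set of outputs of input a. *)
Definition Gam (N : nat) (U : 'I_N -> finType) : finType :=
  {dffun forall a : 'I_N, U a}.

(* labels (a_1 alpha_1, ..., a_k alpha_k) of the members of A_k *)
Definition Lab (N : nat) (U : 'I_N -> finType) (k : nat) : finType :=
  {ffun 'I_k -> {a : 'I_N & U a}}.

Definition Gk (N : nat) (U : 'I_N -> finType) (k : nat) : finType :=
  {ffun 'I_k -> Gam U}.

(* [a_1 alpha_1] x ... x [a_k alpha_k] *)
Definition atom (N : nat) (U : 'I_N -> finType) (k : nat) (s : Lab U k)
  : {set Gk U k} :=
  [set g : Gk U k | [forall i : 'I_k, g i (tag (s i)) == tagged (s i)]].

Definition Ak (N : nat) (U : 'I_N -> finType) (k : nat) : {set {set Gk U k}} :=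
  [set atom s | s : Lab U k].

Definition decomposable (N : nat) (U : 'I_N -> finType) (k : nat)
  (p : {set Gk U k}) : Prop :=
  exists F : {set {set Gk U k}},
    [/\ F \subset Ak U k, trivIset F & cover F = p].

Definition Ek (N : nat) (U : 'I_N -> finType) (k : nat) (p : {set Gk U k}) : Prop :=
  decomposable p /\ decomposable (~: p).

Definition Edef (N : nat) (U : 'I_N -> finType) (k : nat)
  (p q : {set Gk U k}) : Prop :=
  p :&: q = set0 /\ decomposable (~: (p :|: q)).

Definition Eop (N : nat) (U : 'I_N -> finType) (k : nat)
  (p q : {set Gk U k}) : {set Gk U k} := p :|: q.

Definition Ek_state (R : realFieldType) (N : nat) (U : 'I_N -> finType) (k : nat)
  (rho : {set Gk U k} -> R) : Prop :=
  is_state (@Ek N U k) (@Edef N U k) (@Eop N U k) setT rho.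

(* PR-states: P s = P(alpha_1..alpha_k | a_1..a_k) where s i = (a_i, alpha_i) *)
Definition PR_state (R : realFieldType) (N : nat) (U : 'I_N -> finType) (k : nat)
  (P : Lab U k -> R) : Prop :=
  [/\ (forall s, 0 <= P s),
      (forall a : 'I_k -> 'I_N,
         \sum_(s : Lab U k | [forall i, tag (s i) == a i]) P s = 1) &
      (* no-signaling: fix i, a_j and alpha_j (j != i), a_i (from s), and b_i *)
      (forall (i : 'I_k) (s : Lab U k) (b : 'I_N),
         \sum_(t : Lab U k | [forall j, (j != i) ==> (t j == s j)]
                             && (tag (t i) == tag (s i))) P t
       = \sum_(t : Lab U k | [forall j, (j != i) ==> (t j == s j)]
                             && (tag (t i) == b)) P t)].

(* Main.v *)
Require Import Defs.
From HB Require Import structures.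
From mathcomp Require Import all_boot all_order all_algebra.
Set Implicit Arguments. Unset Strict Implicit. Unset Printing Implicit Defensive.
Import Order.TTheory GRing.Theory Num.Theory.

Lemma in_atom N (U : 'I_N -> finType) k (t : Lab U k) g :
  (g \in atom t) = [forall i, g i (tag (t i)) == tagged (t i)].
Proof. by rewrite inE. Qed.

Definition lab N (U : 'I_N -> finType) k (a : 'I_k -> 'I_N) (g : Gk U k) : Lab U k :=
  [ffun i => Tagged (fun x => U x) (g i (a i))].

Lemma eqE_tag N (U : 'I_N -> finType) (l : {x : 'I_N & U x}) (gam : Gam U) :
  (gam (tag l) == tagged l) = (Tagged (fun x => U x) (gam (tag l)) == l).
Proof. by case: l => a x /=; rewrite eq_sym eq_Tagged /= eq_sym. Qed.

Lemma atom_lab N (U : 'I_N -> finType) k (a : 'I_k -> 'I_N) (t : Lab U k) g :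
  (forall i, tag (t i) = a i) -> (g \in atom t) = (t == lab a g).
Proof.
move=> ht; rewrite in_atom; apply/forallP/eqP => [H|->].
  apply/ffunP => i; rewrite /lab ffunE; have := H i; rewrite eqE_tag => /eqP <-.
  by rewrite ht.
by move=> i; rewrite /lab !ffunE.
Qed.

Lemma eq_lab N (U : 'I_N -> finType) k (t t' : Lab U k) g :
  (forall i, tag (t i) = tag (t' i)) -> g \in atom t -> g \in atom t' -> t = t'.
Proof.
move=> ht h1 h2.
have e1 : forall i, tag (t i) = (fun i => tag (t i)) i by [].
have e2 : forall i, tag (t' i) = (fun i => tag (t i)) i by move=> i; rewrite ht.
have := atom_lab g e1; have := atom_lab g e2; by rewrite h1 h2 => /esym/eqP -> /esym/eqP.
Qed.

Lemma meas_dec N (U : 'I_N -> finType) k (a : 'I_k -> 'I_N) (p : {set Gk U k}) :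
  (forall g h : Gk U k, (forall i, g i (a i) = h i (a i)) -> g \in p -> h \in p) ->
  decomposable p.
Proof.
move=> Hp.
have ta : forall (g : Gk U k) i, tag (lab a g i) = a i.
  move=> g i; by rewrite /lab ffunE.
exists [set atom (lab a g) | g in p]; split.
- apply/subsetP => A /imsetP [g _ ->]; apply/imsetP; by exists (lab a g).
- apply/trivIsetP => A B /imsetP [g _ ->] /imsetP [h _ ->] neq.
  rewrite -setI_eq0; apply/eqP; apply/setP => x; rewrite in_setI in_set0.
  apply/negP => /andP [x1 x2]; move/negP: neq; apply.
  by rewrite (@eq_lab _ _ _ (lab a g) (lab a h) x) // => i; rewrite !ta.
- apply/setP => x; apply/bigcupP/idP => [[A /imsetP [g gp ->]] |xp].
    rewrite (atom_lab _ (ta g)) => /eqP e; apply: (Hp g) => // i.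
    by have := congr1 (fun f : Lab U k => f i) e; rewrite /lab !ffunE => h; exact: (eq_from_Tagged h).
  exists (atom (lab a x)); first by apply/imsetP; exists x.
  by rewrite (atom_lab _ (ta x)).
Qed.

Lemma dec0 N (U : 'I_N -> finType) k : decomposable (set0 : {set Gk U k}).
Proof.
exists set0; split; first exact: sub0set.
  by apply/trivIsetP => A B; rewrite inE.
by rewrite /cover big_set0.
Qed.

Lemma decU N (U : 'I_N -> finType) k (p q : {set Gk U k}) :
  p :&: q = set0 -> decomposable p -> decomposable q -> decomposable (p :|: q).
Proof.
move=> pq [F [F1 F2 F3]] [G [G1 G2 G3]]; exists (F :|: G); split.
- by rewrite subUset F1 G1.
- by apply: trivIsetU => //; rewrite F3 G3 -setI_eq0 pq.
- by rewrite /cover bigcup_setU -/(cover F) -/(cover G) F3 G3.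
Qed.

Lemma dec_atom N (U : 'I_N -> finType) k (t : Lab U k) : Ek (atom t).
Proof.
split.
  exists [set atom t]; split; last exact: cover1; last exact: trivIset1.
  by rewrite sub1set; apply/imsetP; exists t.
apply: (@meas_dec _ _ _ (fun i => tag (t i))) => g h e.
rewrite !inE; apply: contra => /forallP H; apply/forallP => i; rewrite e; exact: H.
Qed.

Lemma decT N (U : 'I_N -> finType) k (hN : (0 < N)%N) : decomposable (setT : {set Gk U k}).
Proof. by apply: (@meas_dec _ _ _ (fun _ => Ordinal hN)) => g h _ _; rewrite inE. Qed.

Lemma effect N (U : 'I_N -> finType) k (hN : (0 < N)%N) :
  is_effect_algebra (@Ek N U k) (@Edef N U k) (@Eop N U k) set0 setT.
Proof.
have dT := decT U k hN.
rewrite /Ek /Edef /Eop; split; [|split; [|split; [|split; [|split; [|split]]]]].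
- by rewrite setC0; split => //; exact: dec0.
- by rewrite setCT; split => //; exact: dec0.
- move=> p q [p1 p2] [q1 q2] [pq c]; split => //; exact: decU.
- move=> p q _ _ [pq c]; by rewrite setIC setUC.
- move=> p q r [p1 p2] [q1 q2] [r1 r2] [qr c1] [pqr c2].
  have M : forall x, ~~ ((x \in q) && (x \in r)) && ~~ ((x \in p) && ((x \in q) || (x \in r))).
    move=> x; have := congr1 (fun S : {set Gk U k} => x \in S) qr.
    have := congr1 (fun S : {set Gk U k} => x \in S) pqr.
    by rewrite !inE; case: (x \in p); case: (x \in q); case: (x \in r).
  have pq : p :&: q = set0.
    apply/setP => x; rewrite !inE; move: (M x).
    by case: (x \in p); case: (x \in q); case: (x \in r).
  have pr : p :&: r = set0.
    apply/setP => x; rewrite !inE; move: (M x).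
    by case: (x \in p); case: (x \in q); case: (x \in r).
  split; [split=> // | split | by rewrite setUA].
  + have -> : ~: (p :|: q) = (~: (p :|: (q :|: r))) :|: r.
      apply/setP => x; rewrite !inE; move: (M x).
      by case: (x \in p); case: (x \in q); case: (x \in r).
    apply: decU => //; apply/setP => x; rewrite !inE.
    by case: (x \in r); rewrite ?orbT ?andbF.
  + apply/setP => x; rewrite !inE; move: (M x).
    by case: (x \in p); case: (x \in q); case: (x \in r).
  + by rewrite -setUA.
- move=> p [p1 p2]; exists (~: p); split.
  + by rewrite setCK.
  + by rewrite setICr setUCr setCT; split => //; exact: dec0.
  + by rewrite setUCr.
  + move=> q' _ [pq _] e; apply/setP => x; rewrite !inE.
    have := congr1 (fun S : {set Gk U k} => x \in S) e; have := congr1 (fun S : {set Gk U k} => x \in S) pq.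
    by rewrite !inE; case: (x \in p); case: (x \in q').
- move=> p _ [pT _]; by rewrite setIT in pT.
Qed.
Local Open Scope ring_scope.

Lemma Ek0 N (U : 'I_N -> finType) k (hN : (0 < N)%N) : Ek (set0 : {set Gk U k}).
Proof. by split; rewrite ?setC0; [apply: dec0 | apply: decT]. Qed.

Lemma state0 (R : realFieldType) N (U : 'I_N -> finType) k (rho : {set Gk U k} -> R) (hN : (0 < N)%N) :
  Ek_state rho -> rho set0 = 0.
Proof.
case=> _ _ H.
have o : osum (@Ek N U k) (@Edef N U k) (@Eop N U k) (rcons [:: set0] set0) (Eop set0 set0).
  apply: osumS; [apply: osum1; exact: Ek0 hN | exact: Ek0 hN | ].
  by split; rewrite ?setI0 // setU0 setC0; apply: decT.
have := H _ _ o; rewrite /Eop setU0 /= big_cons big_seq1 => e.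
by apply: (addrI (rho set0)); rewrite addr0 -e.
Qed.

Lemma osum_list N (U : 'I_N -> finType) k (s : seq {set Gk U k}) (hN : (0 < N)%N) :
  uniq s -> (forall q, q \in s -> Ek q) ->
  (forall q q', q \in s -> q' \in s -> q != q' -> q :&: q' = set0) ->
  decomposable (~: \bigcup_(q <- s) q) ->
  osum (@Ek N U k) (@Edef N U k) (@Eop N U k) (set0 :: s) (\bigcup_(q <- s) q).
Proof.
elim/last_ind: s => [|s q IH]; first by rewrite big_nil => *; apply: osum1; exact: Ek0 hN.
rewrite rcons_uniq => /andP [qs us] E D dc.
have Eq : Ek q by apply: E; rewrite mem_rcons mem_head.
have Es : forall q', q' \in s -> Ek q' by move=> q' h; apply: E; rewrite mem_rcons inE h orbT.
have disj : (\bigcup_(x <- s) x) :&: q = set0.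
  apply/setP => x; rewrite bigcup_seq !inE; apply/negP => /andP [/bigcupP [q' q's xq'] xq].
  have := D q' q; rewrite !mem_rcons !inE q's eqxx orbT => /(_ isT isT).
  have -> : q' != q by apply: contraNneq qs => <-.
  by move=> /(_ isT) /setP /(_ x); rewrite !inE xq xq'.
rewrite big_rcons /= in dc *.
change (osum (@Ek N U k) (@Edef N U k) (@Eop N U k) (rcons (set0 :: s) q) (Eop (\bigcup_(x <- s) x) q)).
apply: osumS => //.
apply: IH => // [q1 q2 h1 h2|].
  by apply: D; rewrite mem_rcons inE ?h1 ?h2 orbT.
have -> : ~: (\bigcup_(x <- s) x) = (~: (\bigcup_(x <- s) x :|: q)) :|: q.
  apply/setP => x; have := congr1 (fun S : {set Gk U k} => x \in S) disj.
  by rewrite !inE; case: (x \in q); case: (x \in \bigcup_(x <- s) x).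
apply: decU => //; last by case: Eq.
by apply/setP => x; rewrite !inE; case: (x \in q); rewrite ?orbT ?andbF.
Qed.

Lemma state_cover (R : realFieldType) N (U : 'I_N -> finType) k (rho : {set Gk U k} -> R)
  (hN : (0 < N)%N) (F : {set {set Gk U k}}) :
  Ek_state rho -> (forall A, A \in F -> Ek A) ->
  (forall A B, A \in F -> B \in F -> A != B -> A :&: B = set0) ->
  decomposable (~: cover F) -> rho (cover F) = \sum_(A in F) rho A.
Proof.
move=> st EF DF dc.
have e : cover F = \bigcup_(q <- enum F) q by rewrite /cover big_enum.
have o : osum (@Ek N U k) (@Edef N U k) (@Eop N U k) (set0 :: enum F) (\bigcup_(q <- enum F) q).
  apply: osum_list => //; first exact: enum_uniq.
  - by move=> q; rewrite mem_enum; apply: EF.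
  - by move=> q q'; rewrite !mem_enum; apply: DF.
  - by rewrite -e.
rewrite e; case: (st) => _ _ H; rewrite (H _ _ o) big_cons (state0 hN st) add0r big_enum //.
Qed.

Lemma Ak_Ek N (U : 'I_N -> finType) k (A : {set Gk U k}) : A \in Ak U k -> Ek A.
Proof. by case/imsetP => t _ ->; apply: dec_atom. Qed.

Lemma state_decomp (R : realFieldType) N (U : 'I_N -> finType) k (rho : {set Gk U k} -> R)
  (hN : (0 < N)%N) (p : {set Gk U k}) (F : {set {set Gk U k}}) :
  Ek_state rho -> Ek p -> F \subset Ak U k -> trivIset F -> cover F = p ->
  rho p = \sum_(A in F) rho A.
Proof.
move=> st [_ dp] sF tF cF; rewrite -cF; apply: state_cover => //.
- by move=> A h; apply: Ak_Ek; exact: (subsetP sF).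
- by move=> A B hA hB nAB; apply/eqP; rewrite setI_eq0; exact: (trivIsetP tF).
- by rewrite cF.
Qed.

Lemma atom_wit N (U : 'I_N -> finType) k (om : forall a, U a) (t : Lab U k) :
  exists g : Gk U k, g \in atom t.
Proof.
exists [ffun i => (finfun (dfwith om (tagged (t i))) : Gam U)].
by rewrite in_atom; apply/forallP => i; rewrite !ffunE dfwith_in.
Qed.

Lemma sum_atoms (R : realFieldType) N (U : 'I_N -> finType) k (rho : {set Gk U k} -> R)
  (hN : (0 < N)%N) (om : forall a, U a) (C : pred (Lab U k)) :
  Ek_state rho -> (forall t t', C t -> C t' -> forall i, tag (t i) = tag (t' i)) ->
  decomposable (~: \bigcup_(t | C t) atom t) ->
  rho (\bigcup_(t | C t) atom t) = \sum_(t | C t) rho (atom t).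
Proof.
move=> st tags dc.
have inj : {in C &, injective (@atom N U k)}.
  move=> t t' ht ht' e; have [g gt] := atom_wit om t.
  by apply: (eq_lab (g := g)) => //; [apply: tags | rewrite -e].
rewrite -cover_imset state_cover ?cover_imset //.
- by rewrite (big_imset _ inj).
- by move=> A /imsetP [t _ ->]; apply: dec_atom.
- move=> A B /imsetP [t ht ->] /imsetP [t' ht' ->] ne.
  apply/setP => x; rewrite in_setI in_set0; apply/negP => /andP [x1 x2]; move/negP: ne; apply.
  by rewrite (eq_lab (g := x) _ x1 x2) // => i; apply: tags.
Qed.

Lemma lab_in N (U : 'I_N -> finType) k a (g : Gk U k) : g \in atom (lab a g).
Proof. by rewrite in_atom; apply/forallP => i; rewrite /lab ffunE. Qed.

Lemma state_PR (R : realFieldType) N (U : 'I_N -> finType) k (rho : {set Gk U k} -> R)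
  (hN : (0 < N)%N) (om : forall a, U a) :
  Ek_state rho -> PR_state (fun s => rho (atom s)).
Proof.
move=> st; have st' := st; case: st' => B T _; split.
- by move=> s; have /andP [] := B _ (dec_atom s).
- move=> a; rewrite -(sum_atoms hN om st).
  + suff -> : \bigcup_(t : Lab U k | [forall i, tag (t i) == a i]) atom t = setT by [].
    apply/setP => g; rewrite inE; apply/bigcupP; exists (lab a g).
      by apply/forallP => i; rewrite /lab ffunE.
    exact: lab_in.
  + by move=> t t' /forallP h /forallP h' i; rewrite (eqP (h i)) (eqP (h' i)).
  + suff -> : \bigcup_(t : Lab U k | [forall i, tag (t i) == a i]) atom t = setT by rewrite setCT; apply: dec0.
    apply/setP => g; rewrite inE; apply/bigcupP; exists (lab a g).
      by apply/forallP => i; rewrite /lab ffunE.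
    exact: lab_in.
- move=> i s b.
  set Y := [set g : Gk U k | [forall j, (j != i) ==> (g j (tag (s j)) == tagged (s j))]].
  have HY : forall b', \bigcup_(t : Lab U k | [forall j, (j != i) ==> (t j == s j)] && (tag (t i) == b')) atom t = Y.
    move=> b'; apply/setP => g; rewrite inE; apply/bigcupP/forallP.
      move=> [t /andP [/forallP ht _]]; rewrite in_atom => /forallP hg j.
      by apply/implyP => jn; have := hg j; rewrite (eqP (implyP (ht j) jn)).
    move=> hg; exists [ffun j => if j == i then Tagged (fun x => U x) (g i b') else s j].
      apply/andP; split; last by rewrite ffunE eqxx.
      by apply/forallP => j; apply/implyP => /negbTE jn; rewrite ffunE jn.
    rewrite in_atom; apply/forallP => j; rewrite ffunE.
    case: (eqVneq j i) => [->|jn]; first by rewrite eqxx.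
    exact: (implyP (hg j) jn).
  have tg : forall b', forall t t', [forall j, (j != i) ==> (t j == s j)] && (tag (t i) == b') ->
      [forall j, (j != i) ==> (t' j == s j)] && (tag (t' i) == b') -> forall j, tag (t j) = tag (t' j).
    move=> b' t t' /andP [/forallP h1 /eqP h2] /andP [/forallP h1' /eqP h2'] j.
    case: (eqVneq j i) => [->|jn]; first by rewrite h2 h2'.
    by rewrite (eqP (implyP (h1 j) jn)) (eqP (implyP (h1' j) jn)).
  have dY : decomposable (~: Y).
    apply: (@meas_dec _ _ _ (fun j => tag (s j))) => g h e.
    rewrite !inE; apply: contra => /forallP H; apply/forallP => j; rewrite e; exact: H.
  rewrite -!(sum_atoms hN om st (tg _)) ?HY //.
Qed.

Definition upd N (U : 'I_N -> finType) (om : Gam U) (l : {x : 'I_N & U x}) : Gam U :=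
  finfun (dfwith (fun b => om b) (tagged l)).

Definition Kf (R : realFieldType) N (U : 'I_N -> finType) (om : Gam U) (a0 : 'I_N)
  (gam : Gam U) (l : {x : 'I_N & U x}) : R :=
  (gam == upd om l)%:R - (N.-1)%:R * ((tag l == a0) && (gam == om))%:R.

Definition Mf (R : realFieldType) N (U : 'I_N -> finType) (om : Gam U) (a0 : 'I_N)
  (l' l : {x : 'I_N & U x}) : R :=
  (upd om l (tag l') == tagged l')%:R - (N.-1)%:R * ((tag l == a0) && (om (tag l') == tagged l'))%:R.

Lemma sum_ind (R : realFieldType) (T : finType) (F : T -> R) v :
  \sum_x F x * (x == v)%:R = F v.
Proof.
rewrite (bigD1 v) //= eqxx mulr1 big1 ?addr0 // => x /negbTE ->; by rewrite mulr0.
Qed.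

Lemma KM (R : realFieldType) N (U : 'I_N -> finType) (om : Gam U) (a0 : 'I_N) l' l :
  \sum_(gam : Gam U) (gam (tag l') == tagged l')%:R * Kf R om a0 gam l = Mf R om a0 l' l.
Proof.
rewrite /Kf /Mf; under eq_bigr do rewrite mulrBr.
rewrite sumrB sum_ind; congr (_ - _).
case: (tag l == a0) => /=; last by rewrite mulr0 big1 // => *; rewrite !mulr0.
under eq_bigr do rewrite mulrCA; by rewrite -big_distrr sum_ind.
Qed.

Lemma upd_same N (U : 'I_N -> finType) (om : Gam U) (l l' : {x : 'I_N & U x}) :
  tag l = tag l' -> (upd om l (tag l') == tagged l') = (l == l').
Proof.
case: l' => a' y; case: l => a x /= e; subst a'.
by rewrite /upd ffunE dfwith_in eq_sym eq_Tagged /= eq_sym.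
Qed.

Lemma upd_diff N (U : 'I_N -> finType) (om : Gam U) (l l' : {x : 'I_N & U x}) :
  tag l != tag l' -> upd om l (tag l') = om (tag l').
Proof. by move=> ne; rewrite /upd ffunE dfwith_out. Qed.

Lemma M1 (R : realFieldType) N (U : 'I_N -> finType) (om : Gam U) (a0 : 'I_N)
  (f : {x : 'I_N & U x} -> R) m l' :
  (forall a, \sum_(l | tag l == a) f l = m) -> \sum_l Mf R om a0 l' l * f l = f l'.
Proof.
move=> hm; rewrite /Mf; under eq_bigr do rewrite mulrBl.
rewrite sumrB (bigID (fun l => tag l == tag l')) /=.
have e1 : \sum_(l | tag l == tag l') (upd om l (tag l') == tagged l')%:R * f l = f l'.
  rewrite (bigD1 l') //= upd_same // eqxx mul1r big1 ?addr0 // => l /andP [/eqP t ne].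
  by rewrite upd_same // (negbTE ne) mul0r.
have e2 : \sum_(l | tag l != tag l') (upd om l (tag l') == tagged l')%:R * f l
    = (om (tag l') == tagged l')%:R * ((N.-1)%:R * m).
  rewrite (eq_bigr (fun l => (om (tag l') == tagged l')%:R * f l)); last first.
    by move=> l ne; rewrite upd_diff.
  rewrite -big_distrr /=; congr (_ * _).
  rewrite (partition_big (fun l => tag l) (fun a => a != tag l')) //=.
  rewrite (eq_bigr (fun _ => m)); last first.
    move=> a ne; rewrite -(hm a); apply: eq_bigl => l.
    by case: eqP => // ->; rewrite eq_sym (negbTE ne).
  by rewrite sumr_const cardC1 card_ord mulr_natl.
have e3 : \sum_l (N.-1)%:R * ((tag l == a0) && (om (tag l') == tagged l'))%:R * f l
    = (N.-1)%:R * ((om (tag l') == tagged l')%:R * m).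
  rewrite -(hm a0) !big_distrr /= [RHS]big_mkcond /=; apply: eq_bigr => l _.
  by case: (tag l == a0); rewrite /= ?mulr0 ?mul0r ?mulrA.
by rewrite e1 e2 e3 mulrCA addrK.
Qed.

Definition setl N (U : 'I_N -> finType) k (t : Lab U k) (i0 : 'I_k) (u : {x : 'I_N & U x}) : Lab U k :=
  [ffun j => if j == i0 then u else t j].

Lemma setl_id N (U : 'I_N -> finType) k (t : Lab U k) i0 : setl t i0 (t i0) = t.
Proof. by apply/ffunP => j; rewrite ffunE; case: eqP => // ->. Qed.

Lemma NSre (R : realFieldType) N (U : 'I_N -> finType) k (P : Lab U k -> R) (t : Lab U k) i0 a :
  \sum_(t' : Lab U k | [forall j, (j != i0) ==> (t' j == t j)] && (tag (t' i0) == a)) P t'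
  = \sum_(u | tag u == a) P (setl t i0 u).
Proof.
rewrite (partition_big (fun t' : Lab U k => t' i0) (fun u => tag u == a)); last by move=> t' /andP [].
apply: eq_bigr => u ua; rewrite (big_pred1 (setl t i0 u)) // => t'.
apply/andP/eqP => [[/andP [/forallP h _] /eqP e]|->].
  apply/ffunP => j; rewrite ffunE; case: eqP => [->|/eqP ne] //.
  exact/eqP/(implyP (h j) ne).
rewrite ffunE eqxx ua; split => //; apply/andP; split => //.
by apply/forallP => j; apply/implyP => /negbTE ne; rewrite ffunE ne.
Qed.

Lemma marg (R : realFieldType) N (U : 'I_N -> finType) k (P : Lab U k -> R) (t : Lab U k) i0 :
  PR_state P -> forall a,
  \sum_(u | tag u == a) P (setl t i0 u) = \sum_(u | tag u == tag (t i0)) P (setl t i0 u).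
Proof. by case=> _ _ ns a; rewrite -!NSre (ns i0 t a). Qed.

Definition Qs (R : realFieldType) N (U : 'I_N -> finType) k (om : Gam U) (a0 : 'I_N)
  (P : Lab U k -> R) (n : nat) (t : Lab U k) : R :=
  \sum_(s : Lab U k | [forall j : 'I_k, (n <= j)%N ==> (s j == t j)])
     (\prod_(i : 'I_k | (i < n)%N) Mf R om a0 (t i) (s i)) * P s.

Lemma Q0 (R : realFieldType) N (U : 'I_N -> finType) k (om : Gam U) a0 (P : Lab U k -> R) t :
  Qs om a0 P 0 t = P t.
Proof.
rewrite /Qs (big_pred1 t); first by rewrite big_pred0 ?mul1r // => i; rewrite ltn0.
move=> s; apply/forallP/eqP => [h|->] //; last by move=> j; rewrite eqxx implybT.
by apply/ffunP => j; apply/eqP; exact: (implyP (h j)).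
Qed.

Lemma Qk (R : realFieldType) N (U : 'I_N -> finType) k (om : Gam U) a0 (P : Lab U k -> R) t :
  Qs om a0 P k t = \sum_(s : Lab U k) (\prod_i Mf R om a0 (t i) (s i)) * P s.
Proof.
rewrite /Qs; apply: eq_big => [s|s _].
  by apply/forallP => j; rewrite leqNgt ltn_ord.
by congr (_ * _); apply: eq_bigl => i; rewrite ltn_ord.
Qed.

Lemma Cstep N (U : 'I_N -> finType) k n (hn : (n < k)%N) (s t : Lab U k) u :
  [forall j : 'I_k, (n.+1 <= j)%N ==> (s j == t j)] && (s (Ordinal hn) == u)
  = [forall j : 'I_k, (n <= j)%N ==> (s j == setl t (Ordinal hn) u j)].
Proof.
apply/andP/forallP => [[/forallP h /eqP e] j|h].
  apply/implyP => nj; rewrite ffunE; case: (eqVneq j (Ordinal hn)) => [->|ne]; first by rewrite e.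
  apply: (implyP (h j)); rewrite ltn_neqAle nj andbT; apply: contra ne => /eqP e'.
  by apply/eqP/val_inj; rewrite /= e'.
split.
  apply/forallP => j; apply/implyP => nj; have := implyP (h j) (ltnW nj).
  rewrite ffunE; case: (eqVneq j (Ordinal hn)) => [e|//]; by rewrite e ltnn in nj.
by have := implyP (h (Ordinal hn)) (leqnn n); rewrite ffunE eqxx.
Qed.

Lemma Qstep (R : realFieldType) N (U : 'I_N -> finType) k (om : Gam U) a0 (P : Lab U k -> R)
  n (hn : (n < k)%N) t :
  Qs om a0 P n.+1 t = \sum_u Mf R om a0 (t (Ordinal hn)) u * Qs om a0 P n (setl t (Ordinal hn) u).
Proof.
set i0 := Ordinal hn.
rewrite /Qs (partition_big (fun s : Lab U k => s i0) predT) //=.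
apply: eq_bigr => u _; rewrite big_distrr /=.
apply: eq_big => [s|s]; first exact: Cstep.
move/andP => [_ /eqP e].
rewrite (bigD1 i0) /=; last exact: ltnSn.
rewrite e -!mulrA; congr (_ * (_ * _)).
apply: eq_big => [i|i ilt].
  apply/andP/idP => [[h1 h2]|h]; last first.
    split; first exact: ltnW.
    by apply: contraTneq h => ->; rewrite ltnn.
  rewrite ltn_neqAle -ltnS h1 andbT; apply: contra h2 => /eqP e'.
  by apply/eqP/val_inj; rewrite /= e'.
rewrite ffunE; case: (eqVneq i i0) => [e'|//]; by rewrite e' eqxx andbF in ilt.
Qed.

Lemma sumM (R : realFieldType) N (U : 'I_N -> finType) k (om : Gam U) a0 (P : Lab U k -> R) (t : Lab U k) :
  PR_state P -> \sum_(s : Lab U k) (\prod_i Mf R om a0 (t i) (s i)) * P s = P t.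
Proof.
move=> PR; rewrite -Qk.
suff H : forall n, (n <= k)%N -> forall t, Qs om a0 P n t = P t by apply: H.
elim=> [|n IH] hn t'; first exact: Q0.
rewrite (Qstep _ _ _ hn).
under eq_bigr do rewrite IH ?(ltnW hn) //.
rewrite (@M1 R N U om a0 (fun u => P (setl t' (Ordinal hn) u))
   (\sum_(u | tag u == tag (t' (Ordinal hn))) P (setl t' (Ordinal hn) u))).
  by rewrite setl_id.
by move=> a; apply: marg.
Qed.

Lemma prod_ind (R : realFieldType) (I : finType) (b : pred I) :
  \prod_i ((b i)%:R : R) = ([forall i, b i])%:R.
Proof.
case: (boolP [forall i, b i]) => [/forallP h|/forallPn [i hi]].
  by rewrite big1 // => i _; rewrite h.
by rewrite (bigD1 i) //= (negbTE hi) mul0r.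
Qed.

Definition cfun (R : realFieldType) N (U : 'I_N -> finType) k (om : Gam U) a0 (P : Lab U k -> R)
  (g : Gk U k) : R :=
  \sum_(s : Lab U k) (\prod_i Kf R om a0 (g i) (s i)) * P s.

Lemma atom_sum (R : realFieldType) N (U : 'I_N -> finType) k (om : Gam U) a0 (P : Lab U k -> R) (t : Lab U k) :
  PR_state P -> \sum_(g in atom t) cfun om a0 P g = P t.
Proof.
move=> PR; rewrite -(sumM om a0 t PR) /cfun exchange_big /=.
apply: eq_bigr => s _; rewrite -big_distrl /=; congr (_ * _).
transitivity (\prod_i \sum_(gam : Gam U) (gam (tag (t i)) == tagged (t i))%:R * Kf R om a0 gam (s i));
  last by apply: eq_bigr => i _; rewrite KM.
rewrite bigA_distr_bigA /= big_mkcond /=; apply: eq_bigr => g _.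
rewrite big_split /= prod_ind -in_atom.
by case: (g \in atom t); rewrite ?mul1r ?mul0r.
Qed.

Lemma msum_dec (R : realFieldType) N (U : 'I_N -> finType) k (c : Gk U k -> R) (P : Lab U k -> R) :
  (forall s, 0 <= P s) -> (forall s, \sum_(g in atom s) c g = P s) ->
  forall p, decomposable p -> 0 <= \sum_(g in p) c g.
Proof.
move=> P0 hc p [F [sF tF <-]]; rewrite big_trivIset //; apply: sumr_ge0 => A /(subsetP sF).
by case/imsetP => t _ ->; rewrite hc.
Qed.

Lemma msum_T (R : realFieldType) N (U : 'I_N -> finType) k (c : Gk U k -> R) (a : 'I_k -> 'I_N) :
  \sum_g c g = \sum_(t : Lab U k | [forall i, tag (t i) == a i]) \sum_(g in atom t) c g.
Proof.
transitivity (\sum_g \sum_(t : Lab U k | [forall i, tag (t i) == a i]) if g \in atom t then c g else 0).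
  apply: eq_bigr => g _; rewrite -big_mkcondr /= (big_pred1 (lab a g)) // => t.
  apply/andP/eqP => [[/forallP h ht]|->].
    by apply/eqP; rewrite -(atom_lab _ (fun i => eqP (h i))).
  by split; [apply/forallP => i; rewrite /lab ffunE | exact: lab_in].
rewrite exchange_big /=; apply: eq_bigr => t _; by rewrite [RHS]big_mkcond.
Qed.

Lemma exists_state (R : realFieldType) N (U : 'I_N -> finType) k (hN : (0 < N)%N)
  (om : Gam U) (P : Lab U k -> R) : PR_state P ->
  exists rho : {set Gk U k} -> R,
           [/\ Ek_state rho,
               (forall s, rho (atom s) = P s),
               (forall p (F : {set {set Gk U k}}), Ek p ->
                  F \subset Ak U k -> trivIset F -> cover F = p ->
                  rho p = \sum_(q in F) rho q) &
               (forall rho' : {set Gk U k} -> R, Ek_state rho' ->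
                  (forall s, rho' (atom s) = P s) ->
                  forall p, Ek p -> rho' p = rho p)].
Proof.
move=> PR; set c := cfun om (Ordinal hN) P.
have hc : forall s, \sum_(g in atom s) c g = P s by move=> s; apply: atom_sum.
have PR' := PR; case: PR' => P0 P1 _.
have dec := msum_dec P0 hc.
have decomp : forall p (F : {set {set Gk U k}}), trivIset F -> cover F = p ->
    \sum_(g in p) c g = \sum_(q in F) \sum_(g in q) c g.
  by move=> p F tF <-; rewrite big_trivIset.
have tot : \sum_(g in [set: Gk U k]) c g = 1.
  rewrite (eq_bigl predT) ?(msum_T c (fun _ => Ordinal hN)); last by move=> g; rewrite inE.
  rewrite -(P1 (fun _ => Ordinal hN)); apply: eq_bigr => t _; exact: hc.
exists (fun p : {set Gk U k} => \sum_(g in p) c g); split => //.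
- split => //.
  + move=> p [d1 d2]; rewrite dec //=.
    have e : \sum_(g in [set: Gk U k]) c g = \sum_(g in setT :&: p) c g + \sum_(g in setT :\: p) c g.
      exact: big_setID.
    move: e; rewrite setTI setTD tot => ->; rewrite lerDl; exact: dec.
  + move=> s r; elim => [p _|s0 r0 q o IH Eq [rq _]]; first by rewrite big_seq1.
    rewrite big_rcons /= -IH /Eop -bigU /=; last by rewrite -setI_eq0 rq.
    by apply: eq_bigl => g; rewrite !inE.
- by move=> p F _ _ tF cF; exact: decomp.
- move=> rho' st' h' p Ep.
  have [F [sF tF cF]] := Ep.1.
  rewrite (state_decomp hN st' Ep sF tF cF) (decomp p F tF cF).
  apply: eq_bigr => A /(subsetP sF) /imsetP [t _ ->]; by rewrite h' hc.
Qed.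
Unset Implicit Arguments.

Theorem mainTheorem1 (R : realFieldType) (N : nat) (U : 'I_N -> finType)
  (k : nat) (hN : (0 < N)%N) (hU : forall a, (0 < #|U a|)%N) (hk : (0 < k)%N) :
  (* (i) *)
  (is_effect_algebra (@Ek N U k) (@Edef N U k) (@Eop N U k) set0 setT
   /\ (forall A, A \in Ak U k -> Ek A))
  /\
  (* (ii) *)
  [/\ (forall rho : {set Gk U k} -> R, Ek_state rho ->
         PR_state (fun s => rho (atom s))),
      (forall P : Lab U k -> R, PR_state P ->
         exists rho : {set Gk U k} -> R,
           [/\ Ek_state rho,
               (forall s, rho (atom s) = P s),
               (forall p (F : {set {set Gk U k}}), Ek p ->
                  F \subset Ak U k -> trivIset F -> cover F = p ->
                  rho p = \sum_(q in F) rho q) &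
               (forall rho' : {set Gk U k} -> R, Ek_state rho' ->
                  (forall s, rho' (atom s) = P s) ->
                  forall p, Ek p -> rho' p = rho p)]) &
      (* injectivity of rho |-> P_rho (states are functions on E_k) *)
      (forall rho1 rho2 : {set Gk U k} -> R, Ek_state rho1 -> Ek_state rho2 ->
         (forall s, rho1 (atom s) = rho2 (atom s)) ->
         forall p, Ek p -> rho1 p = rho2 p)].
Proof.
have w : forall a, U a.
  move=> a; case: (pickP (@predT (U a))) => [x _|h]; first exact: x.
  exfalso; move/card_gt0P: (hU a) => [x _]; by have := h x.
have om : Gam U := finfun w.
split; first by split; [exact: effect | exact: Ak_Ek].
split.
- by move=> rho st; exact: state_PR.
- by move=> P PR; exact: exists_state.
- move=> rho1 rho2 st1 st2 h p Ep.
  have [F [sF tF cF]] := Ep.1.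
  rewrite (state_decomp hN st1 Ep sF tF cF) (state_decomp hN st2 Ep sF tF cF).
  by apply: eq_bigr => A /(subsetP sF) /imsetP [t _ ->].
Qed.
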